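(* Let $\mathcal{N}=\{1,\dots,N\}$ be a finite set of players and let $v:2^{\mathcal{N}}\to\mathbb{R}$ be any real-valued set function (the coalition value, with $v(\emptyset)=0$). For a coalition $\mathcal{S}\subseteq\mathcal{N}$ and a player $i\in\mathcal{S}$, let the payoff $x_i(\mathcal{S})$ be the Shapley value of $i$ in the game $v$ restricted to $\mathcal{S}$: $$x_i(\mathcal{S})=\sum_{\mathcal{T}\subseteq \mathcal{S}\setminus\{i\}}\frac{|\mathcal{T}|!\,(|\mathcal{S}|-|\mathcal{T}|-1)!}{|\mathcal{S}|!}\bigl(v(\mathcal{T}\cup\{i\})-v(\mathcal{T})\bigr).$$ Consider the hedonic shift process with histories defined in the context below, started from an arbitrary initial partition $\Pi_0$ of $\mathcal{N}$ with all histories empty. Then every sequence of moves of this process is finite; i.e., the process always reaches, after finitely many moves, a final partition $\Pi_f$ at which no player has an admissible move.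
   Context: A coalition partition of $\mathcal{N}$ is a set $\Pi=\{\mathcal{S}_1,\dots,\mathcal{S}_l\}$ of nonempty pairwise disjoint subsets of $\mathcal{N}$ whose union is $\mathcal{N}$; $\mathcal{S}_\Pi(i)$ denotes the member of $\Pi$ containing $i$. Hedonic shift process with histories: the state is a pair $(\Pi,(h(i))_{i\in\mathcal{N}})$ where $\Pi$ is a coalition partition and each history $h(i)$ is a set of subsets of $\mathcal{N}\setminus\{i\}$; initially every $h(i)=\emptyset$. A move is performed by a single player $i$ as follows. Let $\mathcal{S}_{\mathrm{cur}}=\mathcal{S}_\Pi(i)$. The eligible targets are the sets $\mathcal{T}\in(\Pi\setminus\{\mathcal{S}_{\mathrm{cur}}\})\cup\{\emptyset\}$ with $\mathcal{T}\notin h(i)$. Player $i$ has an admissible move if some eligible $\mathcal{T}$ satisfies $x_i(\mathcal{T}\cup\{i\})>x_i(\mathcal{S}_{\mathrm{cur}})$; in that case $i$ chooses an eligible $\mathcal{T}$ maximizing $x_i(\mathcal{T}\cup\{i\})$ (ties broken arbitrarily), the partition becomes $(\Pi\setminus\{\mathcal{S}_{\mathrm{cur}},\mathcal{T}\})\cup\{\mathcal{S}_{\mathrm{cur}}\setminus\{i\},\mathcal{T}\cup\{i\}\}$ (with the empty set discarded if $\mathcal{S}_{\mathrm{cur}}\setminus\{i\}=\emptyset$), and $h(i)$ is replaced by $h(i)\cup\{\mathcal{S}_{\mathrm{cur}}\setminus\{i\}\}$; all other histories are unchanged. Moves may be performed by players in any order (asynchronously), one at a time. *)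

(* Defs.v *)
From HB Require Import structures.
From mathcomp Require Import all_boot all_order all_algebra.
Set Implicit Arguments. Unset Strict Implicit. Unset Printing Implicit Defensive.
Import Order.TTheory GRing.Theory Num.Theory.
Local Open Scope ring_scope.

Definition shapley (R : realFieldType) (N : nat) (v : {set 'I_N} -> R)
    (i : 'I_N) (S : {set 'I_N}) : R :=
  \sum_(T in powerset (S :\ i))
     (((#|T|)`! * (#|S| - #|T| - 1)`!)%N%:R / ((#|S|)`!)%:R) * (v (i |: T) - v T).

Definition hstate (N : nat) : Type :=
  ({set {set 'I_N}} * ('I_N -> {set {set 'I_N}}))%type.

Definition init_state (N : nat) (P0 : {set {set 'I_N}}) : hstate N :=
  (P0, fun _ => set0).

Definition eligible (N : nat) (s : hstate N) (i : 'I_N) (T : {set 'I_N}) : Prop :=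
  (T \in s.1 :\ pblock s.1 i \/ T = set0) /\ T \notin s.2 i.

Definition hmove (R : realFieldType) (N : nat) (v : {set 'I_N} -> R)
    (i : 'I_N) (s s' : hstate N) : Prop :=
  let P := s.1 in let h := s.2 in
  let Scur := pblock P i in
  exists T : {set 'I_N},
    [/\ eligible s i T,
        shapley v i Scur < shapley v i (i |: T),
        (forall T', eligible s i T' -> shapley v i (i |: T') <= shapley v i (i |: T)),
        s'.1 = ((P :\ Scur :\ T) :|: [set Scur :\ i; i |: T]) :\ set0 &
        (forall j, s'.2 j = if j == i then h i :|: [set Scur :\ i] else h j)].

Definition hstep (R : realFieldType) (N : nat) (v : {set 'I_N} -> R)
    (s s' : hstate N) : Prop :=
  exists i, hmove v i s s'.

(* Main.v *)
Require Import Defs.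
From HB Require Import structures.
From mathcomp Require Import all_boot all_order all_algebra.
From mathcomp Require Import ring lra zify.
Import Order.TTheory GRing.Theory Num.Theory.
Local Open Scope ring_scope.
Set Implicit Arguments. Unset Strict Implicit.

Section Pot.
Variables (R : realFieldType) (N : nat) (v : {set 'I_N} -> R).
Hypothesis v0 : v set0 = 0.

Definition dco (t s : nat) : R := ((t.-1)`! * (s - t)`!)%N%:R / ((s`!)%:R).
Definition pot (S : {set 'I_N}) : R := \sum_(T in powerset S) dco #|T| #|S| * v T.

Lemma fact_neq0 n : (n`!)%:R != 0 :> R.
Proof. by rewrite pnatr_eq0 -lt0n fact_gt0. Qed.

Lemma coef1 u n : dco u.+1 n.+1 =
  ((u`! * (n.+1 - u - 1)`!)%N%:R / ((n.+1)`!)%:R).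
Proof. rewrite /dco /=. have -> : (n.+1 - u - 1 = n.+1 - u.+1)%N by lia. by []. Qed.

Lemma coef2 u n : (0 < u)%N -> (u <= n)%N ->
  dco u n = dco u n.+1 + ((u`! * (n.+1 - u - 1)`!)%N%:R / ((n.+1)`!)%:R).
Proof.
case: u => [//|k] _ Hk.
have [m ->] : exists m, n = (k.+1 + m)%N by exists (n - k.+1)%N; lia.
rewrite /dco [k.+1.-1]/=.
have -> : ((k.+1 + m) - k.+1 = m)%N by lia.
have -> : ((k.+1 + m).+1 - k.+1 - 1 = m)%N by lia.
have -> : ((k.+1 + m).+1 - k.+1 = m.+1)%N by lia.
rewrite [((k.+1+m).+1)`!]factS.
move: (fact_neq0 (k.+1 + m)).
have H2 : ((k.+1 + m).+1)%:R != 0 :> R by rewrite pnatr_eq0.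
move: H2.
generalize ((k.+1 + m)`!) => F.
rewrite [(m.+1)`!]factS [(k.+1)`!]factS !natrM.
generalize (k`!) (m`!) => a b.
rewrite !mulrSr !natrD => H2 H1.
field. by rewrite H1 H2.
Qed.
Lemma shap_pot i (S : {set 'I_N}) : i \in S -> shapley v i S = pot S - pot (S :\ i).
Proof.
move=> iS.
have cS : #|S| = (#|S :\ i|).+1 by rewrite (cardsD1 i S) iS.
set S' := S :\ i.
have Hsplit : pot S = \sum_(U in powerset S') dco (#|U|.+1) #|S| * v (i |: U)
    + \sum_(U in powerset S') dco #|U| #|S| * v U.
  rewrite {1}/pot (bigID (fun T : {set 'I_N} => i \in T)) /=. congr (_ + _).
  - rewrite (reindex_onto (fun U => i |: U) (fun T => T :\ i)) /=; last first.
      by move=> T /andP[_ iT]; exact: setD1K.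
    apply: eq_big => U.
    + rewrite !powersetE setU11 andbT /S'.
      case iU: (i \in U).
      * have -> : ((i |: U) :\ i == U) = false.
          apply/negbTE/eqP => E. by move: iU; rewrite -E setD11.
        by rewrite andbF subsetD1 iU andbF.
      * by rewrite setU1K ?iU // eqxx andbT subsetD1 iU andbT subUset sub1set iS.
    + rewrite powersetE setU11 andbT => /andP[_ /eqP E].
      case iU: (i \in U); first by move: iU; rewrite -E setD11.
      by rewrite cardsU1 iU.
  - apply: eq_bigl => T. by rewrite !powersetE /S' subsetD1.
rewrite Hsplit /shapley /pot -/S' -addrA -sumrB -big_split /=.
apply: eq_bigr => U HU.
have hU : (#|U| <= #|S'|)%N by apply: subset_leq_card; rewrite -powersetE.
rewrite cS coef1.
case: (posnP #|U|) => [u0|upos].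
  rewrite (cards0_eq u0) v0 cards0. ring.
rewrite (@coef2 _ _ upos hU). ring.
Qed.
Lemma pot0 : pot set0 = 0.
Proof. rewrite /pot; apply: big1 => T; rewrite powersetE subset0 => /eqP ->; by rewrite v0 mulr0. Qed.

Definition Phi (P : {set {set 'I_N}}) : R := \sum_(B in P) pot B.

Lemma sumD0 (X : {set {set 'I_N}}) : \sum_(B in X :\ set0) pot B = \sum_(B in X) pot B.
Proof.
case H: (set0 \in X); first by rewrite [RHS](big_setD1 set0 H) /= pot0 add0r.
apply: eq_bigl => B; rewrite !inE; case: eqP => // ->; by rewrite H.
Qed.

Lemma step i (s s' : hstate N) :
  partition s.1 [set: 'I_N] -> hmove v i s s' ->
  partition s'.1 [set: 'I_N] /\ Phi s.1 < Phi s'.1.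
Proof.
case: s s' => [P h] [P' h'] /= Hp [T [[HT Th] Hlt _ E1 _]] /=.
move: HT Hlt E1; rewrite /=.
set Sc := pblock P i => HT Hlt E1.
move/and3P: Hp => [/eqP cP tP n0P].
have iSc : i \in Sc by rewrite mem_pblock cP inE.
have ScP : Sc \in P by apply: pblock_mem; rewrite cP inE.
have blk : forall B x, B \in P -> x \in B -> B = pblock P x.
  by move=> B x BP xB; rewrite (def_pblock tP BP xB).
have TP : (T \in P /\ T != Sc) \/ T = set0.
  case: HT => [|->]; last by right.
  by rewrite !inE => /andP[? ?]; left.
have iT : i \notin T.
  case: TP => [[TP TSc]|->]; last by rewrite inE.
  apply/negP => iT; move/negP: TSc; apply; apply/eqP; exact: blk.
have Tne : forall x, x \in T -> T \in P /\ T != Sc.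
  move=> x xT; case: TP => // E; by move: xT; rewrite E inE.
set a := Sc :\ i. set b := i |: T.
set A0 := P :\ Sc :\ T.
have memP' : forall B, (B \in P') = (B != set0) && [|| B \in A0, B == a | B == b].
  move=> B; by rewrite E1 !inE.
pose bo y := if y == i then b else if y \in Sc then a else if y \in T then b else pblock P y.
have cls : forall A x, A \in P' -> x \in A -> A = bo x.
  move=> A x; rewrite memP' => /andP[_ /or3P[HA|/eqP->|/eqP->]] xA; rewrite /bo.
  - move: HA; rewrite !inE => /and3P[AT ASc AP].
    have E := blk _ _ AP xA.
    case: eqP => [xi|_].
      by move: ASc; rewrite E xi eqxx.
    case: ifP => [xSc|_].
      by move: ASc; rewrite E -(blk _ _ ScP xSc) eqxx.
    case: ifP => [xT|_]; last exact: E.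
      have [TP' _] := Tne _ xT.
      by move: AT; rewrite E -(blk _ _ TP' xT) eqxx.
  - move: xA; rewrite !inE => /andP[xi xSc]. by rewrite (negbTE xi) xSc.
  - move: xA; rewrite !inE; case: (x =P i) => [-> _|xi /= xT]; first by [].
    rewrite xT.
    case: ifP => // xSc.
    have [TP' TSc] := Tne _ xT.
    by move: TSc; rewrite (blk _ _ TP' xT) -(blk _ _ ScP xSc) eqxx.
have aA0 : a \notin b |: A0.
  rewrite !inE negb_or; apply/andP; split.
    apply/negP => /eqP E; have := setU11 i T; by rewrite -/b -E !inE eqxx.
  apply/negP => /and3P[_ aSc aP].
  have : a != set0 by apply/negP => /eqP E; move: n0P; rewrite -E aP.
  case/set0Pn => x xa.
  have xSc : x \in Sc by move: xa; rewrite inE => /andP[].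
  by move: aSc; rewrite (blk _ _ aP xa) -(blk _ _ ScP xSc) eqxx.
have bA0 : b \notin A0.
  rewrite !inE; apply/negP => /and3P[_ bSc bP].
  by move: bSc; rewrite (blk _ _ bP (setU11 i T)) eqxx.
split.
- apply/and3P; split.
  + apply/eqP/setP => x; rewrite inE; apply/bigcupP.
    exists (bo x); last first.
      rewrite /bo; case: (x =P i) => [->|xi]; first exact: setU11.
      case: ifP => [xSc|_]; first by rewrite !inE xSc andbT; apply/eqP.
      case: ifP => [xT|_]; first by rewrite !inE xT orbT.
      by rewrite mem_pblock cP inE.
    rewrite memP' /bo.
    case: (x =P i) => [xi|xi].
      apply/andP; split; last by rewrite eqxx !orbT.
      by apply/set0Pn; exists i; exact: setU11.
    case: ifP => [xSc|nSc].
      apply/andP; split; last by rewrite eqxx orbT.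
      apply/set0Pn; exists x; rewrite !inE xSc andbT; exact/eqP.
    case: ifP => [xT|nT].
      apply/andP; split; last by rewrite eqxx !orbT.
      by apply/set0Pn; exists i; exact: setU11.
    have xB : x \in pblock P x by rewrite mem_pblock cP inE.
    apply/andP; split; first by apply/set0Pn; exists x.
    apply/orP; left; rewrite !inE pblock_mem ?cP ?inE // andbT.
    apply/andP; split; apply/negP => /eqP E.
      by move: nT; rewrite -E xB.
    by move: nSc; rewrite -E xB.
  + apply/trivIsetP => A B HA HB neq.
    rewrite -setI_eq0; apply/eqP/setP => x; rewrite !inE.
    apply/negP => /andP[xA xB]; move/negP: neq; apply; apply/eqP.
    by rewrite (cls _ _ HA xA) (cls _ _ HB xB).
  + by rewrite memP' eqxx.
- rewrite /Phi E1 sumD0.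
  have -> : A0 :|: [set a; b] = a |: (b |: A0) by rewrite setUC -setUA.
  rewrite (big_setU1 _ aA0) (big_setU1 _ bA0) /=.
  rewrite (big_setD1 Sc ScP) /=.
  have HT0 : \sum_(B in P :\ Sc) pot B = pot T + \sum_(B in A0) pot B.
    case: TP => [[TP' TSc]|E].
      by rewrite (big_setD1 T) // !inE TSc.
    by rewrite /A0 E sumD0 pot0 add0r.
  rewrite HT0.
  move: Hlt; rewrite (@shap_pot i Sc iSc) (@shap_pot i (i |: T) (setU11 i T)) (setU1K iT) => Hlt.
  lra.
Qed.
End Pot.

Theorem proposition1 (R : realFieldType) (N : nat) (v : {set 'I_N} -> R)
    (P0 : {set {set 'I_N}}) :
  v set0 = 0 ->
  partition P0 [set: 'I_N] ->
  ~ (exists f : nat -> hstate N,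
        f 0%N = init_state P0 /\ forall n, hstep v (f n) (f n.+1)).
Proof.
move=> v0 HP [f [f0 Hf]].
have inv : forall n, partition (f n).1 [set: 'I_N].
  elim => [|n IH]; first by rewrite f0.
  have [i Hi] := Hf n; exact: (step v0 IH Hi).1.
have incr : forall n, Phi v (f n).1 < Phi v (f n.+1).1.
  move=> n; have [i Hi] := Hf n; exact: (step v0 (inv n) Hi).2.
have mono : forall m n, (m < n)%N -> Phi v (f m).1 < Phi v (f n).1.
  move=> m; elim => // n IH; rewrite ltnS leq_eqVlt => /orP[/eqP->|/IH H].
    exact: incr.
  exact: lt_trans H (incr n).
have inj : injective (fun k : 'I_(#|{: {set {set 'I_N}}}|).+1 => (f k).1).
  move=> m n /= E; apply: val_inj => /=.
  case: (ltngtP m n) => // H; have := mono _ _ H; by rewrite E ltxx.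
have := leq_card _ inj; by rewrite card_ord ltnn.
Qed.
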